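(* Let $0<v_T<\tfrac12$, $V_u>0$, $g>0$ and $k\ge 0$ (real). Let $L_{g,k}$ be the line through the points $(V_u/(k+1),0)$ and $(0,-gV_u)$, i.e. the graph of $v\mapsto g(k+1)v-gV_u$. Then the central cell fires when $v_u$ is raised from $0$ to $V_u$ if and only if both of the following hold: (1) $L_{g,k}$ lies strictly below the critical segment, i.e. $g(k+1)v-gV_u<F(v)$ for all $v\in[v_{\min},v_i]$; and (2) the slope of $L_{g,k}$ is less than $F'(v_i)$, i.e. $g(k+1)<F'(v_i)$.
   Context: Fix $v_T\in(0,\tfrac12)$ and let $F(v)=v(v-v_T)(1-v)$. Then $F$ has a local minimum at a point $v_{\min}$, a local maximum at a point $v_{\max}$, and an inflection point at $v_i=(1+v_T)/3$, with $0<v_{\min}<v_T<v_i<v_{\max}<1$. The critical segment is the part of the graph of $F$ over $[v_{\min},v_i]$. Central-cell model: for parameters $g>0$ (gap-junction conductance), $k\ge 0$ (real; ratio of total downstream to upstream conductance) and upstream voltage $v_u$, the voltage $v$ of the central cell obeys $\frac{dv}{dt}=F(v)+g(v_u-v)-gkv$. Its equilibria are the solutions of $F(v)=g(k+1)v-gv_u$. Firing: given $V_u>0$, the central cell is said to fire when $v_u$ is raised from $0$ to $V_u$ if there is a threshold–rest collision at some $v_{u,c}\in(0,V_u)$, meaning: there exist $v_{u,c}\in(0,V_u)$ and $v^*\in(v_{\min},v_i)$ with $F(v^* )=g(k+1)v^*-gv_{u,c}$ and $F'(v^* )=g(k+1)$ (at $v_u=v_{u,c}$ the two smallest equilibria,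 rest and threshold, coalesce in a saddle-node bifurcation and disappear as $v_u$ increases further). *)

(* Defs.v *)
From Stdlib Require Import Reals Lra.
Open Scope R_scope.

Definition F (vT v : R) : R := v * (v - vT) * (1 - v).

Definition dF (vT v : R) : R := -3 * v ^ 2 + 2 * (1 + vT) * v - vT.

Lemma dF_is_derivative (vT v : R) : derivable_pt_lim (F vT) v (dF vT v).
Proof.
  pose proof (derivable_pt_lim_mult _ _ v _ _
    (derivable_pt_lim_mult _ _ v _ _ (derivable_pt_lim_id v)
       (derivable_pt_lim_minus _ _ v _ _ (derivable_pt_lim_id v) (derivable_pt_lim_const vT v)))
    (derivable_pt_lim_minus _ _ v _ _ (derivable_pt_lim_const 1 v) (derivable_pt_lim_id v))) as H.
  unfold mult_fct, minus_fct, fct_cte, id in H.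
  replace (dF vT v) with ((1 * (v - vT) + v * (1 - 0)) * (1 - v) + v * (v - vT) * (0 - 1))
    by (unfold dF; ring).
  exact H.
Qed.

(* Local minimum of F: the smaller root of F'. *)
Definition v_min (vT : R) : R :=
  ((1 + vT) - sqrt ((1 + vT) ^ 2 - 3 * vT)) / 3.

(* Local maximum of F: the larger root of F'. *)
Definition v_max (vT : R) : R :=
  ((1 + vT) + sqrt ((1 + vT) ^ 2 - 3 * vT)) / 3.

Definition v_i (vT : R) : R := (1 + vT) / 3.

(* The central cell fires when v_u is raised from 0 to Vu: a threshold-rest
   collision (saddle node on the critical segment) at some v_uc in (0, Vu). *)
Definition fires (vT g k Vu : R) : Prop :=
  exists vuc vstar : R,
    0 < vuc < Vu /\ v_min vT < vstar < v_i vT /\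
    F vT vstar = g * (k + 1) * vstar - g * vuc /\
    dF vT vstar = g * (k + 1).

(* Main.v *)
Require Import Defs.
From Stdlib Require Import Reals Lra Psatz.
Open Scope R_scope.

Lemma taylor_id vT v w :
  F vT v - F vT w - dF vT w * (v - w) = (v - w)^2 * (1 + vT - v - 2 * w).
Proof. unfold F, dF; ring. Qed.

Theorem proposition2p1 (vT Vu g k : R) :
  0 < vT < 1 / 2 -> 0 < Vu -> 0 < g -> 0 <= k ->
  (fires vT g k Vu <->
   ((forall v : R, v_min vT <= v <= v_i vT ->
       g * (k + 1) * v - g * Vu < F vT v) /\
    g * (k + 1) < dF vT (v_i vT))).
Proof.
  intros HvT HVu Hg Hk.
  set (s := g * (k + 1)).
  assert (Hs : 0 < s) by (unfold s; nra).
  split.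
  - intros [vuc [w [Hvuc [Hw [HF HdF]]]]].
    assert (Hw2 : w < (1 + vT) / 3) by (unfold v_i in Hw; lra).
    split.
    + intros v [_ Hv]. unfold v_i in Hv.
      pose proof (taylor_id vT v w) as T.
      rewrite HdF in T. unfold s in *.
      assert (0 <= (v - w)^2 * (1 + vT - v - 2 * w)).
      { apply Rmult_le_pos; [apply pow2_ge_0 | lra]. }
      nra.
    + unfold s; rewrite <- HdF. unfold dF, v_i. nra.
  - intros [Hline HM].
    idtac.
    unfold dF, v_i in HM.
    set (D := (1 + vT) ^ 2 - 3 * vT).
    set (E := (1 + vT) ^ 2 - 3 * vT - 3 * s).
    assert (HE : 0 < E) by (unfold E; nra).
    assert (HED : E < D) by (unfold E, D; lra).
    assert (HD2 : D < (1 + vT)^2) by (unfold D; lra).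
    pose proof (sqrt_lt_R0 E HE) as HsE.
    pose proof (sqrt_sqrt E (Rlt_le _ _ HE)) as HsE2.
    pose proof (sqrt_sqrt D (Rlt_le _ _ (Rlt_trans _ _ _ HE HED))) as HsD2.
    pose proof (sqrt_pos D) as HsD.
    assert (Hlt : sqrt E < sqrt D) by nra.
    assert (Hlt2 : sqrt E < 1 + vT) by nra.
    set (w := ((1 + vT) - sqrt E) / 3).
    assert (Hwpos : 0 < w) by (unfold w; lra).
    assert (HdFw : dF vT w = s).
    { unfold dF, w.
      replace (-3 * (((1 + vT) - sqrt E) / 3) ^ 2 + 2 * (1 + vT) * (((1 + vT) - sqrt E) / 3) - vT)
        with (((1 + vT) ^ 2 - sqrt E * sqrt E - 3 * vT) / 3) by field.
      rewrite HsE2. unfold E. field. }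
    assert (Hwr : v_min vT < w < v_i vT).
    { unfold v_min, v_i, w. fold D. lra. }
    exists ((s * w - F vT w) / g), w.
    split; [|split; [exact Hwr | split; [|exact HdFw]]].
    + assert (Hneg : F vT w - s * w = w^2 * (2 * w - (1 + vT))).
      { rewrite <- HdFw. unfold F, dF. ring. }
      assert (HFl : F vT w - s * w < 0).
      { rewrite Hneg. assert (0 < w^2) by (apply pow_lt; lra). assert (2 * w - (1 + vT) < 0) by (unfold w; lra). nra. }
      assert (Hup : s * w - g * Vu < F vT w).
      { apply Hline. lra. }
      split.
      * apply Rdiv_lt_0_compat; lra.
      * apply (Rmult_lt_reg_r g); [lra|]. unfold Rdiv. rewrite Rmult_assoc, Rinv_l by lra. lra.
    + unfold s. field. lra.
Qed.
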